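(* Let $0<\rho<\mu$, let $\beta$ be the unique real with $\rho(\beta)=\rho$, let $\ell\in\mathbb{N}$ be such that $t=\ell\rho$ is an integer, and let $0<\varepsilon<1$. Let $X_\beta$ have distribution $P_\beta$ and set $$\delta=\ell^{1/2}\,\frac{\mathrm{Var}(\mathrm{wt}_{\mathcal{A}}(X_\beta))^{1/2}}{(1-\varepsilon)^{1/2}},$$ and assume $\delta>0$. Then $$\max_{\substack{j\in\mathbb{Z}\\ -\delta<j<\delta}}\frac{1}{\ell}\log_q\bigl|\mathcal{S}^\ell_{t+j}\bigr|\ \ge\ H_\rho-\frac{|\beta|\delta}{\ell}-\frac{1}{\ell}\log_q\!\left(\frac{2\lceil\delta\rceil-1}{\varepsilon}\right).$$ Moreover, for fixed $\rho$ and $\varepsilon$, the right-hand side converges to $H_\rho$ as $\ell\to\infty$ (along $\ell$ with $\ell\rho\in\mathbb{Z}$).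
   Context: Let $q>1$ be fixed. Let $\mathcal{A}$ be a finite abelian group with $|\mathcal{A}|\ge 2$ and $\mathrm{wt}_{\mathcal{A}}:\mathcal{A}\to\mathbb{Z}_{\ge 0}$ a weight function with $\mathrm{wt}_{\mathcal{A}}(a)=0$ iff $a=0$, extended additively to $\mathcal{A}^\ell$ by $\mathrm{wt}_{\Sigma\mathcal{A}}(v)=\sum_{i=1}^\ell\mathrm{wt}_{\mathcal{A}}(v_i)$. For an integer $s$, $\mathcal{S}^\ell_s=\{v\in\mathcal{A}^\ell:\mathrm{wt}_{\Sigma\mathcal{A}}(v)=s\}$. Let $\mu=\max_a\mathrm{wt}_{\mathcal{A}}(a)$. For $\beta\in\mathbb{R}$ let $P_\beta(a)=q^{-\beta\,\mathrm{wt}_{\mathcal{A}}(a)}/\mathcal{Z}(\beta)$, $\mathcal{Z}(\beta)=\sum_aq^{-\beta\,\mathrm{wt}_{\mathcal{A}}(a)}$, $\rho(\beta)=\sum_aP_\beta(a)\mathrm{wt}_{\mathcal{A}}(a)$; $\rho$ is a bijection $\mathbb{R}\to(0,\mu)$. For $\rho=\rho(\beta)$, $H_\rho=-\sum_{a:P_\beta(a)\ne0}P_\beta(a)\log_qP_\beta(a)$. Convention: $\log_q 0=-\infty$. *)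

(* Defs.v *)
From HB Require Import structures.
From mathcomp Require Import all_boot all_order all_algebra.
From mathcomp Require Import mathcomp_extra boolp classical_sets reals exp.
Set Implicit Arguments. Unset Strict Implicit. Unset Printing Implicit Defensive.
Import Order.TTheory GRing.Theory Num.Theory.
Local Open Scope ring_scope.

Section Defs.
Variables (R : realType) (A : finZmodType) (q : R) (wt : A -> nat).

Definition wtS (l : nat) (v : {ffun 'I_l -> A}) : nat := (\sum_(i < l) wt (v i))%N.

Definition Sl (l : nat) (s : int) : {set {ffun 'I_l -> A}} :=
  [set v | (wtS v)%:Z == s].

Definition mu : nat := (\max_(a : A) wt a)%N.

(* log base q; ln 0 is never used with positive weight since the statement
   only takes logarithms of positive quantities *)
Definition logq (x : R) : R := ln x / ln q.

Definition Zf (b : R) : R := \sum_(a : A) q `^ (- b * (wt a)%:R).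
Definition Pb (b : R) (a : A) : R := q `^ (- b * (wt a)%:R) / Zf b.
Definition rhof (b : R) : R := \sum_(a : A) Pb b a * (wt a)%:R.
(* H_rho for rho = rhof b *)
Definition Hrho (b : R) : R := - \sum_(a : A | Pb b a != 0) Pb b a * logq (Pb b a).
Definition Varwt (b : R) : R := \sum_(a : A) Pb b a * ((wt a)%:R - rhof b) ^+ 2.

Definition deltaf (b eps : R) (l : nat) : R :=
  Num.sqrt l%:R * Num.sqrt (Varwt b) / Num.sqrt (1 - eps).

Definition rhs (b eps : R) (l : nat) : R :=
  Hrho b - `|b| * deltaf b eps l / l%:R
  - logq ((2 * Num.ceil (deltaf b eps l) - 1)%:~R / eps) / l%:R.
End Defs.

(* Main.v *)
Require Import Defs.
From HB Require Import structures.
From mathcomp Require Import all_boot all_order all_algebra.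
From mathcomp Require Import mathcomp_extra boolp classical_sets reals exp.
From mathcomp Require Import ring lra zify.
Import Order.TTheory GRing.Theory Num.Theory.
Local Open Scope ring_scope.

Section Aux.
Variables (R : realType) (A : finZmodType) (q : R) (wt : A -> nat).
Hypothesis hq : 1 < q.
Variable b : R.

Local Notation Z := (Zf q wt b).
Local Notation P := (Pb q wt b).

Lemma q_gt0 : 0 < q. Proof. exact: lt_trans hq. Qed.

Lemma Zf_gt0 : 0 < Z.
Proof.
rewrite /Zf (bigD1 0) //=.
have h1 : 0 < q `^ (- b * (wt 0)%:R) by apply: powR_gt0; exact: q_gt0.
have h2 : 0 <= \sum_(i | i != 0) q `^ (- b * (wt i)%:R).
  by apply: sumr_ge0 => a _; exact: powR_ge0.
lra.
Qed.

Lemma Pb_gt0 a : 0 < P a.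
Proof. by rewrite /Pb divr_gt0 // ?Zf_gt0 // powR_gt0 // q_gt0. Qed.

Lemma sumPb : \sum_a P a = 1.
Proof. by rewrite /Pb -mulr_suml mulfV // gt_eqF // Zf_gt0. Qed.

Definition pv {l} (v : {ffun 'I_l -> A}) : R := \prod_i P (v i).

Lemma powR_morph : {morph powR q : x y / x + y >-> x * y}.
Proof. by move=> x y; rewrite powRD // (gt_eqF q_gt0) implybT. Qed.

Lemma pvE l (v : {ffun 'I_l -> A}) : pv v = q `^ (- b * (wtS wt v)%:R) / Z ^+ l.
Proof.
rewrite /pv /Pb /wtS natr_sum mulr_sumr big_split /= prodr_const card_ord exprVn.
by rewrite -(big_morph _ powR_morph (powRr0 q)).
Qed.

Lemma sum_pv l : \sum_(v : {ffun 'I_l -> A}) pv v = 1.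
Proof.
rewrite /pv -(bigA_distr_bigA (fun (i : 'I_l) (a : A) => P a)) /=.
by rewrite big1 // => i _; rewrite sumPb.
Qed.

Definition hh (a : A) : R := (wt a)%:R - rhof q wt b.

Lemma Eh : \sum_a P a * hh a = 0.
Proof.
rewrite /hh; under eq_bigr do rewrite mulrBr.
by rewrite sumrB -mulr_suml sumPb mul1r /rhof subrr.
Qed.

Lemma prod_if l (k : 'I_l) (x : 'I_l -> R) :
  \prod_i (if i == k then x i else 1) = x k.
Proof. by rewrite -big_mkcond big_pred1_eq. Qed.

Lemma var_pv l :
  \sum_(v : {ffun 'I_l -> A}) pv v * ((wtS wt v)%:R - l%:R * rhof q wt b) ^+ 2
  = l%:R * Varwt q wt b.
Proof.
have e1 (v : {ffun 'I_l -> A}) :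
    (wtS wt v)%:R - l%:R * rhof q wt b = \sum_(i < l) hh (v i).
  rewrite /wtS natr_sum /hh sumrB sumr_const card_ord mulr_natl //.
have e2 (v : {ffun 'I_l -> A}) : pv v * ((wtS wt v)%:R - l%:R * rhof q wt b) ^+ 2
   = \sum_(k < l) \sum_(m < l) pv v * (hh (v k) * hh (v m)).
  rewrite e1 expr2 big_distrl mulr_sumr; apply: eq_bigr => k _.
  by rewrite big_distrr mulr_sumr.
under eq_bigr do rewrite e2.
rewrite exchange_big /=.
under eq_bigr do rewrite exchange_big /=.
have key (k m : 'I_l) :
   \sum_(v : {ffun 'I_l -> A}) pv v * (hh (v k) * hh (v m))
   = if m == k then Varwt q wt b else 0.
  have -> : \sum_(v : {ffun 'I_l -> A}) pv v * (hh (v k) * hh (v m)) =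
     \sum_(v : {ffun 'I_l -> A}) \prod_i (fun i a => P a *
        ((if i == k then hh a else 1) * (if i == m then hh a else 1))) i (v i).
    apply: eq_bigr => v _ /=.
    rewrite /pv [RHS]big_split /=; congr (_ * _).
    by rewrite big_split /= !(prod_if _ _ (fun i => hh (v i))).
  rewrite -(bigA_distr_bigA (fun i a => P a *
        ((if i == k then hh a else 1) * (if i == m then hh a else 1)))) /=.
  rewrite (bigD1 k) //= eqxx.
  case: (eqVneq m k) => [->|mk].
    rewrite [\prod_(i | i != k) _]big1 ?mulr1; last first.
      move=> i ik; rewrite (negbTE ik).
      by under eq_bigr do rewrite !mulr1; rewrite sumPb.
    rewrite /Varwt; apply: eq_bigr => a _; rewrite /hh expr2 //.
  have -> : \sum_a P a * (hh a * 1) = 0 by under eq_bigr do rewrite mulr1; exact: Eh.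
  by rewrite mul0r.
under eq_bigr do under eq_bigr do rewrite key.
under eq_bigr do rewrite -big_mkcond big_pred1_eq.
by rewrite sumr_const card_ord mulr_natl.
Qed.

Lemma HrhoE : Hrho q wt b = ln Z / ln q + b * rhof q wt b.
Proof.
have lq : 0 < ln q by apply: ln_gt0.
have e (a : A) : logq q (P a) = - b * (wt a)%:R - ln Z / ln q.
  rewrite /logq /Pb ln_div ?posrE ?Zf_gt0 ?powR_gt0 ?q_gt0 // ln_powR.
  by field; rewrite gt_eqF.
rewrite /Hrho (eq_bigl xpredT); last by move=> a; rewrite /= lt0r_neq0 ?Pb_gt0.
under eq_bigr do rewrite e mulrBr.
rewrite sumrB -mulr_suml sumPb.
under eq_bigr do rewrite mulrCA.
rewrite -mulr_sumr /rhof.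
lra.
Qed.

End Aux.
Arguments pv {R A} q wt b {l} v.
Arguments sum_pv {R A} q wt hq b l.
Arguments var_pv {R A} q wt hq b l.
Arguments pvE {R A} q wt hq b {l} v.
Arguments Pb_gt0 {R A} q wt hq b a.
Arguments Zf_gt0 {R A} q wt hq b.
Arguments HrhoE {R A} q wt hq b.
Arguments q_gt0 {R} q hq.

Lemma ineq (R : realType) (L l lnZ lnS lnn lne b rho j d : R) : 0 < L -> 0 < l ->
  - (`|b| * d) <= b * j ->
  lne - lnn <= lnS + (- b * (l * rho + j)) * L - l * lnZ ->
  lnZ / L + b * rho - `|b| * d / l - ((lnn - lne) / L) / l <= (lnS / L) / l.
Proof.
move=> L0 l0 hb h.
rewrite -subr_ge0.
have -> : (lnS / L) / l - (lnZ / L + b * rho - `|b| * d / l - ((lnn - lne) / L) / l)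
   = (lnS - l * lnZ - b * rho * l * L + `|b| * d * L + lnn - lne) / (L * l).
  by field; rewrite ?gt_eqF.
apply: divr_ge0; last by apply: mulr_ge0; apply: ltW.
have hb' : 0 <= b * j + `|b| * d by lra.
have := mulr_ge0 hb' (ltW L0).
lra.
Qed.

Section Main.
Variables (R : realType) (A : finZmodType) (q : R) (wt : A -> nat).
Hypothesis hq : 1 < q.
Variables (b eps : R).
Hypotheses (heps0 : 0 < eps) (heps1 : eps < 1).
Variables (l : nat) (t : int).
Hypothesis ht : t%:~R = l%:R * rhof q wt b.

Local Notation Z := (Zf q wt b).
Local Notation P := (Pb q wt b).
Local Notation d := (deltaf q wt b eps l).

Lemma Varwt_ge0 : 0 <= Varwt q wt b.
Proof.
apply: sumr_ge0 => a _; apply: mulr_ge0; last exact: sqr_ge0.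
by apply/ltW/Pb_gt0.
Qed.

Lemma d2 : d ^+ 2 * (1 - eps) = l%:R * Varwt q wt b.
rewrite /deltaf expr_div_n exprMn !sqr_sqrtr ?Varwt_ge0 //; last by rewrite subr_ge0 ltW.
by rewrite divfK // subr_eq0 eq_sym lt_eqF.
Qed.

Hypothesis hd : 0 < d.

Definition good (v : {ffun 'I_l -> A}) := `|(wtS wt v)%:R - t%:~R| < d.

Lemma good_ge : eps <= \sum_(v | good v) pv q wt b v.
Proof.
have tot := sum_pv q wt hq b l.
rewrite (bigID good) /= in tot.
have hb : \sum_(v | ~~ good v) pv q wt b v * d ^+ 2 <= d ^+ 2 * (1 - eps).
  rewrite d2 -(var_pv q wt hq b l) [X in _ <= X](bigID good) /=.
  have h0 : 0 <= \sum_(v | good v) pv q wt b v *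
      ((wtS wt v)%:R - l%:R * rhof q wt b) ^+ 2.
    apply: sumr_ge0 => v _; apply: mulr_ge0; last exact: sqr_ge0.
    by rewrite /pv; apply: prodr_ge0 => i _; apply: ltW; apply: Pb_gt0.
  suff: \sum_(v | ~~ good v) pv q wt b v * d ^+ 2 <= \sum_(v | ~~ good v) pv q wt b v *
      ((wtS wt v)%:R - l%:R * rhof q wt b) ^+ 2 by lra.
  apply: ler_sum => v; rewrite /good -leNgt -ht => hv.
  apply: ler_wpM2l.
    by rewrite /pv; apply: prodr_ge0 => i _; apply: ltW; apply: Pb_gt0.
  rewrite -[X in _ <= X]real_normK ?num_real // !expr2.
  by apply: ler_pM => //; apply: ltW.
rewrite -mulr_suml mulrC ler_pM2l ?exprn_gt0 // in hb.
lra.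
Qed.


Lemma pv_ge0 (v : {ffun 'I_l -> A}) : 0 <= pv q wt b v.
Proof. by rewrite /pv; apply: prodr_ge0 => i _; apply: ltW; apply: Pb_gt0. Qed.

Definition cc := Num.ceil d.
Lemma cc_gt0 : 0 < cc. Proof. by rewrite ceil_gt0. Qed.
Definition nn := `|(2 * cc - 1)%R|%N.
Lemma nnE : nn%:Z = 2 * cc - 1. Proof. have := cc_gt0; rewrite /nn; lia. Qed.
Lemma nn_gt0 : (0 < nn)%N. Proof. have := cc_gt0; rewrite /nn; lia. Qed.
Lemma nnR : (nn%:R : R) = (2 * cc - 1)%:~R. Proof. by rewrite -nnE. Qed.

Definition aa : int := t - cc + 1.
Definition term (s : int) : R :=
  (#|Sl wt l s|)%:R * (q `^ (- b * s%:~R) / Z ^+ l).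

Lemma sum_S s : \sum_(v in Sl wt l s) pv q wt b v = term s.
Proof.
rewrite /term (eq_bigr (fun _ => q `^ (- b * s%:~R) / Z ^+ l)).
  by rewrite sumr_const mulr_natl.
move=> v; rewrite inE => /eqP hv; rewrite (pvE q wt hq b v).
by rewrite -hv.
Qed.

Lemma good_bound v : good v ->
  (0 <= (wtS wt v)%:Z - aa) && ((wtS wt v)%:Z - aa < nn%:Z).
Proof.
rewrite /good => hv.
have h1 : ((((wtS wt v)%:Z - t)%:~R) : R) = (wtS wt v)%:R - t%:~R by rewrite intrB.
have hc := ceil_ge d.
rewrite ltr_norml -h1 in hv; case/andP: hv => hv1 hv2.
have e1 : ((wtS wt v)%:Z - t) < cc.
  by rewrite -(ltr_int R); apply: (lt_le_trans hv2).
have e2 : - cc < ((wtS wt v)%:Z - t).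
  rewrite -(ltr_int R) intrN; apply: le_lt_trans hv1; by rewrite lerN2.
have := nnE; rewrite /aa -/cc; lia.
Qed.

Lemma pigeon : exists k : 'I_nn, eps / nn%:R <= term (aa + k%:Z).
Proof.
have k0 : 'I_nn := Ordinal nn_gt0.
case: (boolP [exists k : 'I_nn, eps / nn%:R <= term (aa + k%:Z)]) => [/existsP //|/existsPn H].
exfalso.
have e1 : \sum_(v | good v) pv q wt b v <=
    \sum_(k : 'I_nn) \sum_(v in Sl wt l (aa + k%:Z)) pv q wt b v.
  rewrite (partition_big (fun v => insubd k0 `|(wtS wt v)%:Z - aa|%N) xpredT) //=.
  apply: ler_sum => k _.
  rewrite [X in X <= _]big_mkcond [X in _ <= X]big_mkcond /=.
  apply: ler_sum => v _.
  case: ifP => [/andP [gv /eqP hk]|_]; last by case: ifP => // _; exact: pv_ge0.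
  suff -> : v \in Sl wt l (aa + k%:Z) by [].
  rewrite inE; apply/eqP.
  have /andP[g1 g2] := good_bound v gv.
  have hk' : val k = `|(wtS wt v)%:Z - aa|%N.
    by rewrite -hk val_insubd ifT //; lia.
  have hk2 : (k : nat) = val k by [].
  lia.
have e2 : \sum_(k : 'I_nn) \sum_(v in Sl wt l (aa + k%:Z)) pv q wt b v < eps.
  under eq_bigr do rewrite sum_S.
  have : \sum_(k : 'I_nn) term (aa + k%:Z) < \sum_(k : 'I_nn) eps / nn%:R.
    apply: ltr_sum; first by apply/hasP; exists k0 => //; rewrite mem_index_enum.
    by move=> k _; rewrite ltNge; exact: H.
  rewrite sumr_const card_ord -[(eps / nn%:R) *+ nn]mulr_natr divfK //.
  by rewrite pnatr_eq0 -lt0n nn_gt0.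
have := good_ge; lra.
Qed.


Lemma l_gt0 : (0 < l)%N.
Proof.
rewrite lt0n; apply/eqP => l0; move: hd; rewrite /deltaf l0 sqrtr0 !mul0r ltxx //.
Qed.

Lemma main1 : exists j : int, - d < j%:~R < d /\ (0 < #|Sl wt l (t + j)|)%N /\
  rhs q wt b eps l <= logq q (#|Sl wt l (t + j)|)%:R / l%:R.
Proof.
have [k hk] := pigeon.
have kn : (k < nn)%N := ltn_ord k.
have hnE := nnE. have hc0 := cc_gt0.
have hcd : ((cc - 1)%:~R : R) < d := ceilB1_lt d.
exists (aa + k%:Z - t).
have -> : t + (aa + k%:Z - t) = aa + k%:Z by rewrite addrC subrK.
have j1 : aa + k%:Z - t <= cc - 1 by rewrite /aa; lia.
have j2 : - (cc - 1) <= aa + k%:Z - t by rewrite /aa; lia.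
have hjd : - d < (aa + k%:Z - t)%:~R < d.
  apply/andP; split.
    apply: (lt_le_trans _ (_ : ((- (cc-1))%:~R : R) <= _)).
      by rewrite intrN ltrN2.
    by rewrite ler_int.
  by apply: le_lt_trans hcd; rewrite ler_int.
split => //.
have nR : (0 : R) < nn%:R by rewrite ltr0n nn_gt0.
have tpos : 0 < term (aa + k%:Z) by apply: lt_le_trans hk; apply: divr_gt0.
have Spos : (0 < #|Sl wt l (aa + k%:Z)|)%N.
  rewrite lt0n; apply/eqP => h; move: tpos; rewrite /term h mul0r ltxx //.
split => //.
set S := #|Sl wt l (aa + k%:Z)|.
have SR : (0 : R) < S%:R by rewrite ltr0n.
have lR : (0 : R) < l%:R by rewrite ltr0n l_gt0.
have Zp := Zf_gt0 q wt hq b.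
have lq : 0 < ln q by apply: ln_gt0.
have qp := q_gt0 q hq.
rewrite /rhs (HrhoE q wt hq b) -nnR /logq.
have -> : ln (nn%:R / eps) = ln nn%:R - ln eps by rewrite ln_div ?posrE.
apply: (ineq _ _ _ _ _ _ _ _ _ ((aa + k%:Z - t)%:~R)) => //.
  apply: lerNnormlW; rewrite normrM; apply: ler_wpM2l => //.
  by rewrite ler_norml; case/andP: hjd => h1 h2; rewrite !ltW.
have := hk; rewrite -ler_ln ?posrE //.
rewrite ln_div ?posrE // /term lnM ?posrE ?divr_gt0 ?powR_gt0 ?exprn_gt0 //.
rewrite ln_div ?posrE ?powR_gt0 ?exprn_gt0 // ln_powR lnXn // -mulr_natl.
have -> : ((aa + k%:Z)%:~R : R) = l%:R * rhof q wt b + (aa + k%:Z - t)%:~R.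
  by rewrite -ht -intrD (addrC t) subrK.
rewrite -/S.
lra.
by apply: divr_gt0.
Qed.

End Main.
Lemma conv_ineq (R : realType) (s C X L bb eps e K : R) : 1 <= s -> 0 < L -> 0 < eps ->
  0 <= bb -> 0 <= C -> 0 <= X -> X <= (2 * (s * C) + 1) / eps ->
  K = bb * C + (2 * C + 1) / (eps * L) -> K / e < s -> 0 < e ->
  bb * (s * C) / (s ^+ 2) + X / L / (s ^+ 2) < e.
Proof.
move=> s1 L0 e0 bb0 C0 X0 hX hK hs e0'.
set W := (2 * C + 1) / (eps * L).
have hY : X / L <= W * s.
  rewrite /W ler_pdivrMr // .
  have -> : (2 * C + 1) / (eps * L) * s * L = (2 * C + 1) * s / eps by field; rewrite ?gt_eqF.
  apply: (le_trans hX); rewrite ler_pM2r ?invr_gt0 //; nra.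
have s0 : 0 < s by lra.
rewrite -mulrDl ltr_pdivrMr ?exprn_gt0 //.
rewrite ltr_pdivrMr // in hs.
rewrite hK -/W in hs.
nra.
Qed.


Section Conv.
Variables (R : realType) (A : finZmodType) (q : R) (wt : A -> nat).
Hypothesis hq : 1 < q.
Variables (b eps : R).
Hypotheses (heps0 : 0 < eps) (heps1 : eps < 1).

Lemma main2 (e : R) : 0 < e -> exists N : nat, forall l : nat, (N <= l)%N ->
     `|rhs q wt b eps l - Hrho q wt b| < e.
Proof.
move=> e0.
set C := Num.sqrt (Varwt q wt b) / Num.sqrt (1 - eps).
have dE l : deltaf q wt b eps l = Num.sqrt l%:R * C by rewrite /deltaf -mulrA.
have C0 : 0 <= C by apply: divr_ge0; apply: sqrtr_ge0.
have lq : 0 < ln q by apply: ln_gt0.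
have rE l : rhs q wt b eps l - Hrho q wt b =
   - (`|b| * deltaf q wt b eps l / l%:R
      + ln ((2 * Num.ceil (deltaf q wt b eps l) - 1)%:~R / eps) / ln q / l%:R).
  by rewrite /rhs /logq; ring.
have [Ceq|Cpos] := eqVneq C 0.
  exists 1%N => l _; rewrite rE dE Ceq mulr0 ceil0 mulr0 ln0; last first.
    by rewrite mulr0 sub0r mulN1r oppr_le0 invr_ge0 ltW.
  by rewrite !(mulr0, mul0r) addr0 oppr0 normr0.
have Cp : 0 < C by rewrite lt0r Cpos.
set K := `|b| * C + (2 * C + 1) / (eps * ln q).
have K0 : 0 <= K.
  apply: addr_ge0; first by apply: mulr_ge0.
  apply: divr_ge0; first lra.
  by apply: mulr_ge0; apply: ltW.
exists (Num.Def.archi_bound ((K / e) ^+ 2)).+1 => l hl.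
have hb := archi_boundP (sqr_ge0 (K / e)).
have lR : (K / e) ^+ 2 < l%:R.
  apply: (lt_le_trans hb); rewrite ler_nat; exact: ltnW.
have l1 : (1 : R) <= l%:R by rewrite ler1n; apply: leq_trans hl.
pose s : R := Num.sqrt l%:R.
have s1 : 1 <= s.
  by rewrite /s -[X in X <= _]sqrtr1 ler_sqrt //; lra.
have hs : K / e < s.
  have := lR; rewrite -ltr_sqrt; last lra.
  by rewrite sqrtr_sqr ger0_norm // divr_ge0 // ltW.
have ls : l%:R = s ^+ 2 by rewrite /s sqr_sqrtr // ler0n.
rewrite rE dE -/s normrN.
set c := Num.ceil (s * C).
have sC : 0 < s * C by apply: mulr_gt0 => //; lra.
have c1 : 0 < c by rewrite ceil_gt0.
have hcd : ((c - 1)%:~R : R) < s * C := ceilB1_lt _.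
have nE : ((2 * c - 1)%:~R : R) = 2 * (c - 1)%:~R + 1.
  have -> : 2 * c - 1 = (c - 1) + (c - 1) + 1 by ring.
  by rewrite !intrD; lra.
have n1 : (1 : R) <= (2 * c - 1)%:~R.
  have : 1 <= 2 * c - 1 by move: c1; clear; lia.
  by rewrite -(ler_int R).
set X := ln ((2 * c - 1)%:~R / eps).
have ne : 0 < (2 * c - 1)%:~R / eps :> R.
  by apply: divr_gt0 => //; apply: lt_le_trans n1.
have X0 : 0 <= X.
  apply: ln_ge0; rewrite ler_pdivlMr // mul1r.
  by apply: le_trans n1; apply: ltW.
have hX : X <= (2 * (s * C) + 1) / eps.
  apply: (le_trans (ltW (ln_sublinear ne))).
  rewrite ler_pM2r ?invr_gt0 // nE.
  by rewrite lerD2r ler_pM2l //; apply: ltW.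
have h1 : 0 <= `|b| * (s * C) / l%:R.
  by apply: divr_ge0 => //; apply: mulr_ge0 => //; apply: ltW.
have h2 : 0 <= X / ln q / l%:R.
  by apply: divr_ge0 => //; apply: divr_ge0 => //; apply: ltW.
rewrite ger0_norm; last by apply: addr_ge0.
rewrite ls.
by apply: (conv_ineq _ _ _ _ _ _ eps _ K) => //; apply: ltW.
Qed.

End Conv.

Theorem mainTheorem8 (R : realType) (A : finZmodType) (q : R) (wt : A -> nat)
  (hq : 1 < q) (hA : (2 <= #|A|)%N) (hwt : forall a : A, wt a = 0%N <-> a = 0)
  (rho beta eps : R) (hrho0 : 0 < rho) (hrhomu : rho < (mu wt)%:R)
  (hbeta : rhof q wt beta = rho) (heps0 : 0 < eps) (heps1 : eps < 1) :
  (forall (l : nat) (t : int), t%:~R = l%:R * rho ->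
     0 < deltaf q wt beta eps l ->
     exists j : int,
       - deltaf q wt beta eps l < j%:~R < deltaf q wt beta eps l /\
       (0 < #|Sl wt l (t + j)|)%N /\
       rhs q wt beta eps l <= logq q (#|Sl wt l (t + j)|)%:R / l%:R)
  /\
  (forall e : R, 0 < e -> exists N : nat, forall l : nat, (N <= l)%N ->
     (exists t : int, t%:~R = l%:R * rho) ->
     `|rhs q wt beta eps l - Hrho q wt beta| < e).
Proof.
split.
  move=> l t ht hd.
  rewrite -hbeta in ht.
  eapply main1; eassumption.
move=> e e0.
have [N HN] := main2 _ _ q wt hq beta eps heps0 heps1 e e0.
by exists N => l hl _; apply: HN.
Qed.
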